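(* Let $-\infty<a<b<\infty$ and let $H\in\mathbb H_{a,b}$ be in the limit circle case. Let $c>0$ and let $\kappa_H$ be the function produced by the algorithm with constant $c$. Let $r>0$ and let $a=s_0<s_1<\dots<s_{k-1}<s_k=b$. - (i) If $\det\Omega(s_{l-1},s_l)\le c/r^2$ for all $l\in\{1,\dots,k\}$, then $\kappa_H(r)\le k$. - (ii) If $\det\Omega(s_{l-1},s_l)\ge c/r^2$ for all $l\in\{1,\dots,k-1\}$, then $\kappa_H(r)\ge k$. - (iii) The function $\kappa_H$ is non-decreasing on $(0,\infty)$. - (iv) $\kappa_H(nr)\le n\,\kappa_H(r)$ for every positive integer $n$ and every $r>0$.
   Context: Hamiltonians: $\mathbb H_{a,b}$ consists of measurable $H:(a,b)\to\mathbb R^{2\times2}$, locally integrable on $[a,c)$ for all $c<b$, with $H(t)\ge0$ a.e. and $\{H=0\}$ null. The limit circle case means $\int_a^b\operatorname{tr}H<\infty$. Put $\Omega(s,t)=\int_s^tH(u)\,du$. Algorithm for $\kappa_H$ (constant $c$): for $r>0$ set $\sigma_0=a$. Recursively: - if $\det\Omega(\sigma_{j-1},b)>c/r^2$, let $\sigma_j\in(\sigma_{j-1},b)$ be the unique point with $\det\Omega(\sigma_{j-1},\sigma_j)=c/r^2$; - otherwise set $\sigma_j=b$, $\kappa_H(r)=j$, and stop. This terminates after finitely many steps. *)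

(* Defs.v *)
From HB Require Import structures.
From mathcomp Require Import all_boot all_order all_algebra.
From mathcomp Require Import all_classical all_reals all_analysis.
Set Implicit Arguments. Unset Strict Implicit. Unset Printing Implicit Defensive.
Import Order.TTheory GRing.Theory Num.Theory.
Local Open Scope classical_set_scope.
Local Open Scope ring_scope.

Section Hamiltonians.
Variable R : realType.
Local Notation mu := (@lebesgue_measure R).

Definition psd2 (M : 'M[R]_2) : Prop :=
  M^T = M /\ forall v : 'cV[R]_2, 0 <= (v^T *m M *m v) 0 0.

(* H in H_{a,b}: measurable, locally integrable on [a,c) for c<b,
   H >= 0 a.e. on (a,b), and {t in (a,b) | H t = 0} is a null set.
   Values of H outside (a,b) are irrelevant. *)
Definition is_Hamiltonian (a b : R) (H : R -> 'M[R]_2) : Prop :=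
  [/\ (forall i j, measurable_fun `]a, b[ (fun t => H t i j)),
      (forall cc, a < cc < b -> forall i j,
          mu.-integrable `]a, cc[ (fun t => (H t i j)%:E)),
      {ae mu, forall t, t \in `]a, b[ -> psd2 (H t)} &
      mu.-negligible ([set t | (t \in `]a, b[) /\ H t = 0]) ].

Definition limit_circle (a b : R) (H : R -> 'M[R]_2) : Prop :=
  (\int[mu]_(t in `]a, b[) (\tr (H t))%:E < +oo)%E.

Definition Omega (H : R -> 'M[R]_2) (s t : R) : 'M[R]_2 :=
  \matrix_(i, j) Rintegral mu `]s, t[ (fun u => H u i j).

(* kappa_spec a b H c r n : the algorithm with constant c, run at r,
   stops with kappa_H(r) = n; sigma is the sequence sigma_0, ..., sigma_n. *)
Definition kappa_spec (a b : R) (H : R -> 'M[R]_2) (c r : R) (n : nat) : Prop :=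
  exists sigma : nat -> R,
    [/\ sigma 0%N = a,
        (forall j, (0 < j < n)%N ->
           [/\ \det (Omega H (sigma j.-1) b) > c / r ^+ 2,
               sigma j.-1 < sigma j < b &
               \det (Omega H (sigma j.-1) (sigma j)) = c / r ^+ 2]),
        (0 < n)%N,
        \det (Omega H (sigma n.-1) b) <= c / r ^+ 2 &
        sigma n = b].

Lemma kappa_spec_exists_bool (a b : R) (H : R -> 'M[R]_2) (c r : R) :
  (exists n, kappa_spec a b H c r n) ->
  exists n, `[< kappa_spec a b H c r n >].
Proof. by move=> [n hn]; exists n; apply/asboolP. Qed.

(* kappa_H(r): the number of steps after which the algorithm stops
   (the algorithm is deterministic, so this n is unique; we take the
   least such n; default 0 is never used since the algorithm terminates). *)
Definition kappa (a b : R) (H : R -> 'M[R]_2) (c r : R) : nat :=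
  match pselect (exists n, kappa_spec a b H c r n) with
  | left h => ex_minn (kappa_spec_exists_bool h)
  | right _ => 0%N
  end.

End Hamiltonians.

(* Main.v *)
Require Import Defs.
From HB Require Import structures.
From mathcomp Require Import all_boot all_order all_algebra.
From mathcomp Require Import all_classical all_reals all_analysis.
From mathcomp Require Import lra ring.
From mathcomp Require Import measurable_realfun.
Import Order.TTheory GRing.Theory Num.Theory.
Import numFieldNormedType.Exports.
Local Open Scope classical_set_scope.
Local Open Scope ring_scope.

Set Implicit Arguments. Unset Strict Implicit.
Section Alg.
Variable R : realFieldType.
Implicit Types A B M : 'M[R]_2.

Lemma det2 M : \det M = M 0 0 * M 1 1 - M 0 1 * M 1 0.
Proof.
rewrite (expand_det_row _ 0) !big_ord_recl big_ord0 addr0 /cofactor !det_mx11.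
rewrite /row' /col' !mxE /=.
have E1 : lift (0:'I_2) (0:'I_1) = 1 by apply/val_inj.
have E2 : lift (1:'I_2) (0:'I_1) = 0 by apply/val_inj.
have E3 : lift (ord0:'I_2) (ord0:'I_1) = 1 by apply/val_inj.
have E4 : (ord0 : 'I_2) = 0 by apply/val_inj.
by rewrite ?E3 ?E1 ?E2 ?E4 /= expr0 expr1 !mul1r mulN1r mulrN.
Qed.

Definition psdm M := [/\ M 0 1 = M 1 0, 0 <= M 0 0, 0 <= M 1 1 & M 0 1 ^+ 2 <= M 0 0 * M 1 1].

Lemma amgm2 (X Y a : R) : 0 <= X -> 0 <= Y -> a ^+ 2 <= X * Y -> 2 * a <= X + Y.
Proof.
move=> X0 Y0 h; have := sqr_ge0 (X - Y) => h'.
rewrite leNgt; apply/negP => h2.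
have : (X + Y) ^+ 2 < (2 * a) ^+ 2 by rewrite ltr_pXn2r ?nnegrE //; nra.
nra.
Qed.

Lemma psdm_add A B : psdm A -> psdm B -> psdm (A + B).
Proof.
move=> [a1 a2 a3 a4] [b1 b2 b3 b4]; split; rewrite !mxE ?a1 ?b1 //; try lra.
rewrite -a1 -b1.
have h1 : 0 <= (A 0 0 * B 1 1 + A 1 1 * B 0 0) by nra.
have h2 : (A 0 1 * B 0 1) ^+2 <= A 0 0 * B 1 1 * (A 1 1 * B 0 0).
  rewrite exprMn; have := ler_pM (sqr_ge0 (A 0 1)) (sqr_ge0 (B 0 1)) a4 b4. nra.
have h3 : 2 * (A 0 1 * B 0 1) <= A 0 0 * B 1 1 + A 1 1 * B 0 0 by apply: amgm2; nra.
nra.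
Qed.

Lemma psdm_det_ge0 M : psdm M -> 0 <= \det M.
Proof. by move=> [m1 m2 m3 m4]; rewrite det2 -m1; lra. Qed.

Lemma psdm_diag_pos M : psdm M -> 0 < \det M -> 0 < M 0 0 /\ 0 < M 1 1.
Proof.
move=> [m1 m2 m3 m4]; rewrite det2 -m1 => h.
split; rewrite lt_neqAle ?m2 ?m3 andbT; apply/eqP=> e; rewrite -e in h; nra.
Qed.

Lemma det_add A B : \det (A + B) = \det A + \det B +
   (A 0 0 * B 1 1 + A 1 1 * B 0 0 - A 0 1 * B 1 0 - A 1 0 * B 0 1).
Proof. rewrite !det2 !mxE; ring. Qed.

Lemma cross_ge A B (x y : R) : psdm A -> psdm B -> 0 <= x -> 0 <= y ->
  x ^+ 2 <= \det A -> y ^+ 2 <= \det B ->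
  2 * (x * y) <= A 0 0 * B 1 1 + A 1 1 * B 0 0 - A 0 1 * B 1 0 - A 1 0 * B 0 1.
Proof.
move=> [a1 a2 a3 a4] [b1 b2 b3 b4] x0 y0; rewrite !det2 -a1 -b1 => hx hy.
set P := A 0 0 * B 1 1 + A 1 1 * B 0 0.
set p := `|A 0 1|; set q := `|B 0 1|.
have p0 : 0 <= p by apply: normr_ge0.
have q0 : 0 <= q by apply: normr_ge0.
have pp : p ^+ 2 = A 0 1 ^+ 2 by rewrite /p real_normK // num_real.
have qq : q ^+ 2 = B 0 1 ^+ 2 by rewrite /q real_normK // num_real.
have pq : A 0 1 * B 0 1 <= p * q by rewrite /p /q -normrM real_ler_norm // num_real.
have P0 : 0 <= P by rewrite /P; nra.
have h1 : 4 * (A 0 0 * A 1 1 * (B 0 0 * B 1 1)) <= P ^+ 2.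
  have := sqr_ge0 (A 0 0 * B 1 1 - A 1 1 * B 0 0); rewrite /P; nra.
have h2 : (p ^+ 2 + x ^+ 2) * (q ^+ 2 + y ^+ 2) <= A 0 0 * A 1 1 * (B 0 0 * B 1 1).
  apply: ler_pM; nra.
have h3 : (p * q + x * y) ^+ 2 <= (p ^+ 2 + x ^+ 2) * (q ^+ 2 + y ^+ 2).
  have := sqr_ge0 (p * y - x * q); nra.
have h4 : 2 * (p * q + x * y) <= P.
  rewrite leNgt; apply/negP => h.
  have h5 : P ^+ 2 < (2 * (p * q + x * y)) ^+ 2.
    by rewrite ltr_pXn2r ?nnegrE //; nra.
  nra.
rewrite -/P; nra.
Qed.

Lemma minkowski A B (x y : R) : psdm A -> psdm B -> 0 <= x -> 0 <= y ->
  x ^+ 2 <= \det A -> y ^+ 2 <= \det B -> (x + y) ^+ 2 <= \det (A + B).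
Proof.
move=> hA hB x0 y0 hx hy; rewrite det_add.
have := @cross_ge A B x y hA hB x0 y0 hx hy; nra.
Qed.

Lemma det_superadd A B : psdm A -> psdm B -> \det A + \det B <= \det (A + B).
Proof.
move=> hA hB; rewrite det_add.
have := @cross_ge A B 0 0 hA hB (lexx _) (lexx _).
rewrite expr0n /= !psdm_det_ge0 // => /(_ isT isT); lra.
Qed.

Lemma det_strict A B : psdm A -> psdm B -> 0 < \det A -> 0 < B 0 0 + B 1 1 ->
  \det A < \det (A + B).
Proof.
move=> hA hB dA tB; rewrite det_add.
have dB := psdm_det_ge0 hB.
have [A0 A1] := psdm_diag_pos hA dA.
move: hA hB dA => [a1 a2 a3 a4] [b1 b2 b3 b4]; rewrite det2 -a1 -b1 => dA.
suff : A 0 1 * B 0 1 + A 0 1 * B 0 1 < A 0 0 * B 1 1 + A 1 1 * B 0 0 by lra.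
have [B0|B0] := eqVneq (B 0 0 * B 1 1) 0.
  have e : B 0 1 = 0 by apply/eqP; rewrite -sqrf_eq0 eq_le sqr_ge0 andbT -B0.
  rewrite e !mulr0 addr0.
  have [e0|e0] := eqVneq (B 0 0) 0.
    rewrite e0 mulr0 addr0; rewrite e0 add0r in tB; nra.
  have : 0 < B 0 0 by rewrite lt_neqAle eq_sym e0.
  nra.
have Bp : 0 < B 0 0 * B 1 1 by rewrite lt_neqAle eq_sym B0; nra.
set P := A 0 0 * B 1 1 + A 1 1 * B 0 0.
set p := `|A 0 1|; set q := `|B 0 1|.
have p0 : 0 <= p by apply: normr_ge0.
have q0 : 0 <= q by apply: normr_ge0.
have pp : p ^+ 2 = A 0 1 ^+ 2 by rewrite /p real_normK // num_real.
have qq : q ^+ 2 = B 0 1 ^+ 2 by rewrite /q real_normK // num_real.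
have pq : A 0 1 * B 0 1 <= p * q by rewrite /p /q -normrM real_ler_norm // num_real.
have P0 : 0 <= P by rewrite /P; nra.
have h1 : 4 * (A 0 0 * A 1 1 * (B 0 0 * B 1 1)) <= P ^+ 2.
  have := sqr_ge0 (A 0 0 * B 1 1 - A 1 1 * B 0 0); rewrite /P; nra.
have h2 : p ^+ 2 * q ^+ 2 < A 0 0 * A 1 1 * (B 0 0 * B 1 1).
  apply: (@le_lt_trans _ _ (p ^+ 2 * (B 0 0 * B 1 1))).
    apply: ler_wpM2l; nra.
  rewrite ltr_pM2r //; nra.
have h4 : 2 * (p * q) < P.
  rewrite ltNge; apply/negP => h.
  have h5 : P ^+ 2 <= (2 * (p * q)) ^+ 2.
    by rewrite ler_pXn2r ?nnegrE //; nra.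
  nra.
rewrite -/P; nra.
Qed.
End Alg.

Section Abs.
Variable R : realType.
Variables a b : R.
Hypothesis ab : a < b.
Variable w : R -> R -> 'M[R]_2.
Hypothesis wpsd : forall s t, a <= s -> s <= t -> t <= b -> psdm (w s t).
Hypothesis wadd : forall s u t, a <= s -> s <= u -> u <= t -> t <= b ->
  w s t = w s u + w u t.
Hypothesis wpos : forall s t, a <= s -> s < t -> t <= b -> 0 < w s t 0 0 + w s t 1 1.
Hypothesis wcont : forall s (i j : 'I_2), a <= s -> s < b ->
  {within `[s, b], continuous (fun t => w s t i j)}.

Lemma wss s : a <= s -> s <= b -> w s s = 0.
Proof.
move=> h1 h2; have h := wadd h1 (lexx s) (lexx s) h2.
by apply: (addrI (w s s)); rewrite addr0 -h.
Qed.

Lemma dss s : a <= s -> s <= b -> \det (w s s) = 0.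
Proof. by move=> h1 h2; rewrite wss // det0. Qed.

Lemma d_super s u t : a <= s -> s <= u -> u <= t -> t <= b ->
  \det (w s u) + \det (w u t) <= \det (w s t).
Proof.
move=> h1 h2 h3 h4; rewrite (wadd h1 h2 h3 h4); apply: det_superadd.
  by apply: wpsd => //; apply: le_trans h4.
by apply: wpsd => //; apply: le_trans h2.
Qed.

Lemma d_ge0 s t : a <= s -> s <= t -> t <= b -> 0 <= \det (w s t).
Proof. by move=> *; apply: psdm_det_ge0; apply: wpsd. Qed.

Lemma d_mono s s' t' t : a <= s -> s <= s' -> s' <= t' -> t' <= t -> t <= b ->
  \det (w s' t') <= \det (w s t).
Proof.
move=> h1 h2 h3 h4 h5.
have e1 := d_super h1 h2 (le_trans h3 h4) h5.
have e2 := d_super (le_trans h1 h2) h3 h4 h5.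
have := d_ge0 h1 h2 (le_trans h3 (le_trans h4 h5)).
have := d_ge0 (le_trans h1 (le_trans h2 h3)) h4 h5.
lra.
Qed.

Lemma d_strict s t t' : a <= s -> s <= t -> t < t' -> t' <= b ->
  0 < \det (w s t) -> \det (w s t) < \det (w s t').
Proof.
move=> h1 h2 h3 h4 h5; rewrite (wadd h1 h2 (ltW h3) h4); apply: det_strict => //.
- by apply: wpsd => //; apply: le_trans (ltW h3) h4.
- by apply: wpsd => //; [apply: le_trans h2 | apply: ltW].
- by apply: wpos => //; apply: le_trans h2.
Qed.

Lemma d_mink s u t (x y : R) : a <= s -> s <= u -> u <= t -> t <= b ->
  0 <= x -> 0 <= y -> x ^+ 2 <= \det (w s u) -> y ^+ 2 <= \det (w u t) ->
  (x + y) ^+ 2 <= \det (w s t).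
Proof.
move=> h1 h2 h3 h4 x0 y0 hx hy; rewrite (wadd h1 h2 h3 h4); apply: minkowski => //.
  by apply: wpsd => //; apply: le_trans h4.
by apply: wpsd => //; apply: le_trans h2.
Qed.

Lemma dcont s : a <= s -> s < b ->
  {within `[s, b], continuous (fun t => \det (w s t))}.
Proof.
move=> h1 h2.
have -> : (fun t => \det (w s t)) = (fun t => w s t 0 0 * w s t 1 1 - w s t 0 1 * w s t 1 0).
  by apply: funext => t; rewrite det2.
move=> x.
have H := (continuousB (continuousM (@wcont s 0 0 h1 h2 x) (@wcont s 1 1 h1 h2 x))
  (continuousM (@wcont s 0 1 h1 h2 x) (@wcont s 1 0 h1 h2 x))).
exact H.
Qed.

Definition spec_of (th : R) (n : nat) (sigma : nat -> R) :=
    [/\ sigma 0%N = a,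
        (forall j, (0 < j < n)%N ->
           [/\ \det (w (sigma j.-1) b) > th,
               sigma j.-1 < sigma j < b &
               \det (w (sigma j.-1) (sigma j)) = th]),
        (0 < n)%N,
        \det (w (sigma n.-1) b) <= th &
        sigma n = b].

Lemma sig_bnd th n sigma : spec_of th n sigma ->
  forall j, (j < n)%N -> a <= sigma j /\ sigma j < b.
Proof.
move=> [s0 sj n0 _ _]; elim=> [|j IH] jn; first by rewrite s0 lexx ab.
have [_ /andP[h1 h2] _] := sj j.+1 jn.
have [IH1 _] := IH (ltnW jn).
by split => //; apply: le_trans IH1 (ltW h1).
Qed.

Lemma sig_mono th n sigma : spec_of th n sigma ->
  forall i j, (i <= j)%N -> (j < n)%N -> sigma i <= sigma j.
Proof.
move=> sp i; have [_ sj _ _ _] := sp.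
elim=> [|j IH]; first by rewrite leqn0 => /eqP ->.
rewrite leq_eqVlt => /orP[/eqP -> //|ij] jn.
have [_ /andP[h1 _] _] := sj j.+1 jn.
by apply: le_trans (IH ij (ltnW jn)) (ltW h1).
Qed.

Definition part (s : nat -> R) (k : nat) :=
  [/\ s 0%N = a, s k = b & forall l, (l < k)%N -> s l < s l.+1].

Lemma part_mono s k : part s k -> forall i j, (i <= j)%N -> (j <= k)%N -> s i <= s j.
Proof.
move=> [_ _ sl] i; elim=> [|j IH]; first by rewrite leqn0 => /eqP ->.
rewrite leq_eqVlt => /orP[/eqP -> //|ij] jk.
by apply: le_trans (IH ij (ltnW jk)) (ltW (sl j jk)).
Qed.

Lemma part_bnd s k : part s k -> forall l, (l <= k)%N -> a <= s l /\ s l <= b.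
Proof.
move=> p l lk; have [s0 sk _] := p.
by rewrite -s0 -sk !(part_mono p) //.
Qed.

Lemma part_k s k : part s k -> (0 < k)%N.
Proof.
move=> [s0 sk _]; case: k sk => // sk; move: ab; rewrite -s0 sk.
by rewrite ltxx.
Qed.

Lemma specA th n sigma s k : 0 < th -> spec_of th n sigma -> part s k ->
  (forall l, (1 <= l <= k)%N -> \det (w (s l.-1) (s l)) <= th) -> (n <= k)%N.
Proof.
move=> th0 sp p hl; have [s0 sj n0 _ _] := sp.
have claim : forall j, (j < n)%N -> (j <= k)%N -> s j <= sigma j.
  elim=> [|j IH] jn jk; first by rewrite s0; case: p => ->.
  have IH' := IH (ltnW jn) (ltnW jk).
  have [h0 /andP[h1 h2] h3] := sj j.+1 jn.
  rewrite leNgt; apply/negP => hc.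
  have [b1 _] := part_bnd p (ltnW jk).
  have [_ b2] := part_bnd p jk.
  have m1 := @d_mono (s j) (sigma j) (sigma j.+1) (sigma j.+1) b1 IH' (ltW h1) (lexx _)
    (le_trans (ltW hc) b2).
  have := @d_strict (s j) (sigma j.+1) (s j.+1) b1 (le_trans IH' (ltW h1)) hc b2.
  rewrite h3 in m1 => /(_ (lt_le_trans th0 m1)) m2.
  have := hl j.+1; rewrite /= jk => /(_ isT) h4.
  lra.
rewrite leqNgt; apply/negP => kn.
have k0 := part_k p.
have := claim k kn (leqnn k); case: p => _ -> _ h.
have := sj k; rewrite k0 kn => /(_ isT) [_ /andP[_ h2] _].
by move: h2; rewrite ltNge h.
Qed.

Lemma specB th n sigma s k : 0 < th -> spec_of th n sigma -> part s k ->
  (forall l, (1 <= l <= k.-1)%N -> th <= \det (w (s l.-1) (s l))) -> (k <= n)%N.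
Proof.
move=> th0 sp p hl; have [s0 sj n0 sn1 _] := sp.
have claim : forall j, (j < n)%N -> (j <= k.-1)%N -> sigma j <= s j.
  elim=> [|j IH] jn jk; first by rewrite s0; case: p => ->.
  have IH' := IH (ltnW jn) (ltnW jk).
  have [h0 /andP[h1 h2] h3] := sj j.+1 jn.
  have jk' : (j.+1 <= k)%N by apply: leq_trans jk (leq_pred k).
  rewrite leNgt; apply/negP => hc.
  have [b1 _] := sig_bnd sp (ltnW jn).
  have [_ b2] := part_bnd p jk'.
  have sm := part_mono p (leqnSn j) jk'.
  have m1 := @d_mono (sigma j) (s j) (s j.+1) (s j.+1) b1 IH' sm (lexx _) b2.
  have := hl j.+1; rewrite /= jk => /(_ isT) h4.
  have := @d_strict (sigma j) (s j.+1) (sigma j.+1) b1 (le_trans IH' sm) hc (ltW h2).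
  move=> /(_ (lt_le_trans th0 (le_trans h4 m1))).
  lra.
rewrite leqNgt; apply/negP => nk.
case: n sp n0 sj sn1 claim nk => // m sp _ sj sn1 claim nk /=.
have [b0 _] := sig_bnd sp (ltnSn m).
have mk : (m <= k.-1)%N by rewrite -ltnS prednK // (leq_ltn_trans _ nk).
have := claim m (ltnSn m) mk => cm.
have := hl m.+1; rewrite /= -ltnS prednK ?nk; last by apply: leq_ltn_trans nk.
move=> /(_ isT) h4.
have [b1 _] := part_bnd p (leq_trans (leqnSn m) (ltnW nk)).
have [_ b2] := part_bnd p (ltnW nk).
have sm := part_mono p (leqnSn m) (ltnW nk).
have m1 := @d_mono (sigma m) (s m) (s m.+1) (s m.+1) b0 cm sm (lexx _) b2.
have sb : s m.+1 < b.
  have [_ sk sl] := p; rewrite -sk; apply: lt_le_trans (sl _ nk) _.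
  by apply: (part_mono p).
have := @d_strict (sigma m) (s m.+1) b b0 (le_trans cm sm) sb (lexx b).
move=> /(_ (lt_le_trans th0 (le_trans h4 m1))).
lra.
Qed.

Lemma specC th th' (n m : nat) sigma N tau : 0 < th' -> (0 < n)%N ->
  th = (n%:R) ^+ 2 * th' -> spec_of th m sigma -> spec_of th' N tau ->
  (N <= n * m)%N.
Proof.
move=> th0' n0 eth spS spT.
have th0 : 0 < th by rewrite eth mulr_gt0 // exprn_gt0 // ltr0n.
set x := Num.sqrt th'.
have x0 : 0 <= x by apply: sqrtr_ge0.
have xx : x ^+ 2 = th' by rewrite sqr_sqrtr // ltW.
have [t0 tj N0 tN1 tN] := spT.
have [s0 sj m0 sm1 sm] := spS.
have chain : forall p i, (i + p < N)%N ->
    (p%:R * x) ^+ 2 <= \det (w (tau i) (tau (i + p)%N)).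
  elim=> [|p IH] i h.
    have [b1 b2] : a <= tau i /\ tau i < b by apply: (sig_bnd spT); rewrite addn0 in h.
    by rewrite ?addn0 mul0r expr0n /= dss // ltW.
  have h' : (i + p < N)%N by rewrite addnS in h; apply: ltnW.
  have := tj (i + p).+1; rewrite /= -addnS h => /(_ isT) [_ /andP[h1 h2] e].
  have -> : (p.+1)%:R * x = p%:R * x + x by rewrite -addn1 natrD mulrDl mul1r.
  have [b1 _] : a <= tau i /\ tau i < b by apply: (sig_bnd spT); apply: leq_ltn_trans (leq_addr p i) h'.
  apply: (@d_mink (tau i) (tau (i + p)%N) (tau (i + p.+1)%N)) => //.
  - by apply: (sig_mono spT) => //; apply: leq_addr.
  - exact: ltW.
  - exact: ltW.
  - by apply: mulr_ge0 => //; apply: ler0n.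
  - exact: IH.
  - by rewrite xx e.
have claim : forall l, (n * l < N)%N -> (l <= m)%N -> sigma l <= tau (n * l)%N.
  elim=> [|l IH] h1 h2; first by rewrite muln0 s0 t0.
  have IH' := IH (leq_ltn_trans (leq_mul (leqnn n) (leqnSn l)) h1) (ltnW h2).
  have e : (n * l.+1 = n * l + n)%N by rewrite mulnS addnC.
  rewrite e in h1 *.
  rewrite leNgt; apply/negP => hc.
  have ch := chain n (n * l) h1.
  rewrite exprMn xx -eth in ch.
  have [bs0 _] := sig_bnd spS h2.
  have tm : tau (n * l)%N <= tau (n * l + n)%N by apply: (sig_mono spT) => //; apply: leq_addr.
  have [sb1 dle] : sigma l.+1 <= b /\ \det (w (sigma l) (sigma l.+1)) <= th.
    move: h2; rewrite leq_eqVlt => /orP[/eqP lm|lm].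
      by rewrite lm sm lexx; rewrite -lm /= in sm1.
    have := sj l.+1; rewrite /= lm => /(_ isT) [_ /andP[_ q] ->].
    by rewrite ltW.
  have m1 := @d_mono (sigma l) (tau (n * l)%N) (tau (n * l + n)%N) (tau (n * l + n)%N) bs0 IH' tm
    (lexx _) (le_trans (ltW hc) sb1).
  have := @d_strict (sigma l) (tau (n * l + n)%N) (sigma l.+1) bs0 (le_trans IH' tm) hc sb1.
  move=> /(_ (lt_le_trans th0 (le_trans ch m1))).
  lra.
rewrite leqNgt; apply/negP => h.
have := claim m h (leqnn m); rewrite sm => hb.
have [_ hb'] := sig_bnd spT h.
by move: hb'; rewrite ltNge hb.
Qed.

Definition next th s : R :=
  match pselect (exists t, s < t < b /\ \det (w s t) = th) with
  | left h => projT1 (cid h)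
  | right _ => b
  end.

Lemma nextP th s : (exists t, s < t < b /\ \det (w s t) = th) ->
  s < next th s < b /\ \det (w s (next th s)) = th.
Proof.
move=> h; rewrite /next; case: pselect => [h'|//]; exact: (projT2 (cid h')).
Qed.

Lemma next_spec th s : 0 < th -> a <= s -> s < b -> th < \det (w s b) ->
  s < next th s < b /\ \det (w s (next th s)) = th.
Proof.
move=> th0 h1 h2 h3; apply: nextP.
have [t ht e] : exists2 t, t \in `[s, b] & \det (w s t) = th.
  apply: IVT; first exact: ltW.
    exact: dcont.
  rewrite dss ?ge_min ?le_max //; last exact: ltW.
  by rewrite (ltW th0) (ltW h3) orbT.
move: ht; rewrite in_itv /= => /andP[t1 t2].
exists t; split => //; apply/andP; split.
  rewrite lt_neqAle t1 andbT; apply/eqP => est.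
  by move: e; rewrite -est dss //; [move=> e; move: th0; rewrite -e ltxx | exact: ltW].
rewrite lt_neqAle t2 andbT; apply/eqP => etb.
by move: h3; rewrite -etb e ltxx.
Qed.

Lemma spec_exists th : 0 < th -> exists n sigma, spec_of th n sigma.
Proof.
move=> th0.
pose sg j := iter j (next th) a.
have inv : (forall j, th < \det (w (sg j) b)) -> forall j,
    [/\ a <= sg j, sg j < b & j%:R * th <= \det (w a (sg j))].
  move=> hn; elim=> [|j [IH1 IH2 IH3]].
    by rewrite /= lexx ab mul0r dss // ltW.
  have [/andP[n1 n2] n3] := next_spec th0 IH1 IH2 (hn j).
  have -> : sg j.+1 = next th (sg j) by [].
  split; [exact: le_trans IH1 (ltW n1) | exact: n2 |].
  have := @d_super a (sg j) (next th (sg j)) (lexx a) IH1 (ltW n1) (ltW n2).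
  have -> : (j.+1)%:R * th = j%:R * th + th by rewrite -addn1 natrD mulrDl mul1r.
  rewrite n3.
  lra.
have exP : exists j, \det (w (sg j) b) <= th.
  apply: contrapT => hne.
  have hn : forall j, th < \det (w (sg j) b).
    move=> j; rewrite ltNge; apply/negP => hle; apply: hne; exists j; exact: hle.
  set D := \det (w a b).
  have := inv hn (Num.truncn (D / th)).+1 => -[i1 i2 i3].
  have := truncnS_gt (D / th); rewrite ltr_pdivrMr // => hD.
  have := @d_mono a a (sg (Num.truncn (D / th)).+1) b (lexx a) (lexx a) i1 (ltW i2) (lexx b).
  rewrite -/D; lra.
case: (ex_minnP exP) => N PN minN.
have hi : forall i, (i < N)%N -> th < \det (w (sg i) b).
  move=> i iN; rewrite ltNge; apply/negP => hle.
  by have := minN i hle; rewrite leqNgt iN.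
have inv2 : forall i, (i <= N)%N -> a <= sg i /\ sg i < b.
  elim=> [|i IH] iN; first by rewrite /= lexx ab.
  have [IH1 IH2] := IH (ltnW iN).
  have [/andP[n1 n2] n3] := next_spec th0 IH1 IH2 (hi i iN).
  by split => //; apply: le_trans IH1 (ltW n1).
exists N.+1, (fun j => if (j <= N)%N then sg j else b); split => //.
- move=> j /andP[j0 jN]; rewrite ltnS in jN.
  case: j j0 jN => // j _ jN /=.
  rewrite jN (ltnW jN).
  have [IH1 IH2] := inv2 j (ltnW jN).
  have [n1 n2] := next_spec th0 IH1 IH2 (hi j jN).
  by split => //; apply: hi.
- by rewrite /= leqnn.
- by rewrite ltnn.
Qed.

Lemma spec_part th n sigma : spec_of th n sigma -> part sigma n.
Proof.
move=> sp; have [s0 sj n0 _ sn] := sp; split => // l ln.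
have [lt|eq] := ltnP l.+1 n.
  by have := sj l.+1; rewrite /= lt => /(_ isT) [_ /andP[]].
have e : l.+1 = n by apply/eqP; rewrite eqn_leq ln eq.
by rewrite e sn; have [] := sig_bnd sp ln.
Qed.

Lemma specMono th1 th2 n1 n2 s1 s2 : 0 < th2 -> th2 <= th1 ->
  spec_of th1 n1 s1 -> spec_of th2 n2 s2 -> (n1 <= n2)%N.
Proof.
move=> t2 t21 sp1 sp2.
apply: (specA (lt_le_trans t2 t21) sp1 (spec_part sp2)) => l /andP[l1 ln].
have [s0 sj n0 sn1 sn] := sp2.
have [lt|eq] := ltnP l n2.
  by have := sj l; rewrite l1 lt => /(_ isT) [_ _ ->].
have e : l = n2 by apply/eqP; rewrite eqn_leq ln eq.
by rewrite e sn; apply: le_trans sn1 t21.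
Qed.

Lemma all_facts :
  [/\ (forall th, 0 < th -> exists n sigma, spec_of th n sigma),
      (forall th n sigma s k, 0 < th -> spec_of th n sigma -> part s k ->
        (forall l, (1 <= l <= k)%N -> \det (w (s l.-1) (s l)) <= th) -> (n <= k)%N),
      (forall th n sigma s k, 0 < th -> spec_of th n sigma -> part s k ->
        (forall l, (1 <= l <= k.-1)%N -> th <= \det (w (s l.-1) (s l))) -> (k <= n)%N),
      (forall th1 th2 n1 n2 s1 s2, 0 < th2 -> th2 <= th1 ->
        spec_of th1 n1 s1 -> spec_of th2 n2 s2 -> (n1 <= n2)%N) &
      (forall th th' (n m : nat) sigma N tau, 0 < th' -> (0 < n)%N ->
        th = (n%:R) ^+ 2 * th' -> spec_of th m sigma -> spec_of th' N tau ->
        (N <= n * m)%N)].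
Proof.
split.
- exact: spec_exists.
- by move=> th n sigma s k h1 h2 h3 h4; apply: (specA h1 h2 h3 h4).
- by move=> th n sigma s k h1 h2 h3 h4; apply: (specB h1 h2 h3 h4).
- by move=> th1 th2 n1 n2 s1 s2 h1 h2 h3 h4; apply: (specMono h1 h2 h3 h4).
- by move=> th th' n m sigma N tau h1 h2 h3 h4 h5; apply: (specC h1 h2 h3 h4 h5).
Qed.

End Abs.

Section IntHelp.
Variable R : realType.
Local Notation mu := (@lebesgue_measure R).
Lemma intRZ (D : set R) (k : R) (f : R -> R) : measurable (D : set (measurableTypeR R)) ->
  mu.-integrable D (EFin \o f) -> mu.-integrable D (EFin \o (fun x => k * f x)).
Proof.
move=> mD h; have := integrableZl mD k h.
by apply: eq_integrable => //.
Qed.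
Lemma intRD (D : set R) (f g : R -> R) : measurable (D : set (measurableTypeR R)) ->
  mu.-integrable D (EFin \o f) -> mu.-integrable D (EFin \o g) ->
  mu.-integrable D (EFin \o (fun x => f x + g x)).
Proof.
move=> mD hf hg; apply: (eq_integrable mD _ _ _ (integrableD mD hf hg)).
by move=> x _ /=; rewrite EFinD.
Qed.
End IntHelp.

Section Good.
Variable R : realType.
Local Notation mu := (@lebesgue_measure R).
Variable G : R -> 'M[R]_2.
Hypothesis gpsd : forall t, psdm (G t).
Hypothesis gint : forall i j, mu.-integrable setT (EFin \o (fun t => G t i j)).

Lemma gintD D i j : measurable D -> mu.-integrable D (EFin \o (fun t => G t i j)).
Proof. by move=> mD; apply: integrableS (gint i j). Qed.

Lemma OmE s t i j : Omega G s t i j = \int[mu]_(u in `]s, t[) G u i j.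
Proof. by rewrite /Omega mxE. Qed.

Lemma quad_psdm (A B C : R) :
  (forall x y, 0 <= x ^+ 2 * A + 2 * x * y * B + y ^+ 2 * C) ->
  [/\ 0 <= A, 0 <= C & B ^+ 2 <= A * C].
Proof.
move=> h.
have hA : 0 <= A by have := h 1 0; rewrite expr1n expr0n /= !mulr0 !mul0r !addr0 mul1r.
have hC : 0 <= C by have := h 0 1; rewrite expr1n expr0n /= !mulr0 !mul0r !add0r mul1r.
split => //.
have [A0|A0] := eqVneq A 0.
  have := h (- (C + 1) / 2) B; rewrite A0 mulr0 add0r => h1.
  rewrite mul0r; nra.
have Ap : 0 < A by rewrite lt_neqAle eq_sym A0.
have := h B (- A) => h1; nra.
Qed.

Lemma psdm_quad (M : 'M[R]_2) x y : psdm M ->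
  0 <= x ^+ 2 * M 0 0 + 2 * x * y * M 0 1 + y ^+ 2 * M 1 1.
Proof.
move=> [m1 m2 m3 m4].
have := @amgm2 R (x ^+ 2 * M 0 0) (y ^+ 2 * M 1 1) (- (x * y * M 0 1)).
have h1 : 0 <= x ^+ 2 * M 0 0 by apply: mulr_ge0 => //; apply: sqr_ge0.
have h2 : 0 <= y ^+ 2 * M 1 1 by apply: mulr_ge0 => //; apply: sqr_ge0.
have h3 : (- (x * y * M 0 1)) ^+ 2 <= x ^+ 2 * M 0 0 * (y ^+ 2 * M 1 1).
  rewrite sqrrN !exprMn.
  have : x ^+ 2 * y ^+ 2 * M 0 1 ^+ 2 <= x ^+ 2 * y ^+ 2 * (M 0 0 * M 1 1).
    by apply: ler_wpM2l => //; apply: mulr_ge0; apply: sqr_ge0.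
  move=> h; apply: le_trans h _; rewrite le_eqVlt; apply/orP; left; apply/eqP; ring.
move=> /(_ h1 h2 h3) h; nra.
Qed.

Lemma Om_psd s t : psdm (Omega G s t).
Proof.
have mD : measurable (`]s, t[ : set R) by [].
have sym : Omega G s t 0 1 = Omega G s t 1 0.
  by rewrite !OmE; apply: eq_Rintegral => u _; have [] := gpsd u.
have [h1 h2 h3] : [/\ 0 <= Omega G s t 0 0, 0 <= Omega G s t 1 1 &
    Omega G s t 0 1 ^+ 2 <= Omega G s t 0 0 * Omega G s t 1 1].
  apply: quad_psdm => x y.
  rewrite !OmE -!RintegralZl ?mulrA; try exact: gintD.
  rewrite -!RintegralD //; first last.
  - by apply: intRZ => //; apply: gintD.
  - by apply: intRZ => //; apply: gintD.
  - by apply: intRZ => //; apply: gintD.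
  - by apply: intRD => //; apply: intRZ => //; apply: gintD.
  apply: Rintegral_ge0 => u _.
  exact: psdm_quad.
all: try exact: measurable_itv.
by split.
Qed.

Lemma itv_oo0 (s : R) : [set` `]s, s[] = set0 :> set R.
Proof. apply: set_itv_ge. by rewrite bnd_simp ltxx. Qed.

Lemma Rint_add (f : R -> R) s u t : s <= u -> u <= t ->
  mu.-integrable setT (EFin \o f) ->
  \int[mu]_(x in `]s, t[) f x = \int[mu]_(x in `]s, u[) f x + \int[mu]_(x in `]u, t[) f x.
Proof.
move=> su ut hf.
have [<-|su'] := eqVneq s u.
  by rewrite itv_oo0 Rintegral_set0 add0r.
have [<-|ut'] := eqVneq u t.
  by rewrite itv_oo0 Rintegral_set0 addr0.
have su2 : s < u by rewrite lt_neqAle su' su.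
have ut2 : u < t by rewrite lt_neqAle ut' ut.
have := @Rintegral_itvB R f (BRight s) (BLeft t) u.
rewrite -Rintegral_itv_bndo_bndc; last first.
  by apply: integrableS hf => //; exact: measurable_itv.
move=> <- //; try (by rewrite bnd_simp ?su ?ut2);
  try (by apply: integrableS hf => //; exact: measurable_itv).
by rewrite addrC subrK.
Qed.

Lemma Om_add s u t : s <= u -> u <= t -> Omega G s t = Omega G s u + Omega G u t.
Proof.
move=> su ut; apply/matrixP => i j; rewrite [RHS]mxE !OmE.
exact: Rint_add.
Qed.

Lemma ord2_cases (i : 'I_2) : i = 0 \/ i = 1.
Proof. by case: i => [[|[|//]]] ?; [left|right]; apply/val_inj. Qed.

Lemma psdm_tr0 (M : 'M[R]_2) : psdm M -> M 0 0 + M 1 1 = 0 -> M = 0.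
Proof.
move=> [m1 m2 m3 m4] h.
have e0 : M 0 0 = 0 by lra.
have e1 : M 1 1 = 0 by lra.
have e2 : M 0 1 = 0.
  by apply/eqP; rewrite -sqrf_eq0 eq_le sqr_ge0 andbT; rewrite e0 mul0r in m4.
apply/matrixP => i j; rewrite mxE.
by case: (ord2_cases i) => ->; case: (ord2_cases j) => ->; rewrite ?e0 ?e1 ?e2 -?m1 ?e2.
Qed.

Lemma Om_cont s b (i j : 'I_2) : s <= b ->
  {within `[s, b], continuous (fun t => Omega G s t i j)}.
Proof.
move=> sb.
have hc := @parameterized_integral_continuous R s b (fun u => G u i j) sb
  (gintD i j (measurable_itv `[s, b])).
apply: subspace_eq_continuous hc => t /set_mem /=; rewrite in_itv /= => /andP[st tb].
rewrite /from_subspace /parameterized_integral OmE.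
have [<-|st'] := eqVneq s t.
  by rewrite set_itv1 Rintegral_set1 itv_oo0 Rintegral_set0.
have st2 : s < t by rewrite lt_neqAle st' st.
rewrite -Rintegral_itv_obnd_cbnd; last exact: gintD.
by rewrite Rintegral_itv_bndo_bndc //; exact: gintD.
Qed.

Lemma Om_pos s t : s < t ->
  mu.-negligible ([set` `]s, t[] `&` [set u | G u = 0]) ->
  0 < Omega G s t 0 0 + Omega G s t 1 1.
Proof.
move=> st hZ.
have mD : measurable ([set` `]s, t[] : set (measurableTypeR R)) by exact: measurable_itv.
set f := fun u => G u 0 0 + G u 1 1.
have fint : mu.-integrable `]s, t[ (EFin \o f).
  by apply: intRD => //; apply: gintD.
have e : Omega G s t 0 0 + Omega G s t 1 1 = \int[mu]_(x in `]s, t[) f x.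
  by rewrite !OmE -RintegralD //; apply: gintD.
have f0 : forall u, 0 <= f u by move=> u; have [_ ? ? _] := gpsd u; rewrite /f; lra.
rewrite e lt_neqAle Rintegral_ge0 // andbT; apply/eqP => h0.
have h1 : (\int[mu]_(x in `]s, t[) `|(EFin \o f) x|)%E = 0.
  rewrite (@eq_integral _ _ _ mu _ (EFin \o f)); last first.
    by move=> x _ /=; rewrite ger0_norm.
  have fn := integrable_fin_num mD fint.
  rewrite -(fineK fn); congr EFin; exact (esym h0).
move: (fint) => /integrableP [mf _].
have [N [mN muN sN]] := (ae_eq_integral_abs mu mD mf).1 h1.
have hD : mu.-negligible ([set` `]s, t[] : set R).
  apply: (negligibleS _ (negligibleU (ex_intro _ N (And3 mN muN (@subset_refl _ N))) hZ)).
  move=> u Du.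
  have [fu0|fu0] := eqVneq (f u) 0.
    by right; split => //; apply: psdm_tr0.
  left; apply: sN => /= h.
  by have := h Du => -[] e0; rewrite e0 eqxx in fu0.
have := (negligibleP mu mD).1 hD.
have hm := lebesgue_measure_itv `]s, t[.
rewrite /= lte_fin st in hm.
have hm' : mu `]s, t[ = (t%:E - s%:E)%E by exact: hm.
move=> h0'; have := etrans (esym hm') h0'.
move=> /eqP; rewrite -EFinB eqe subr_eq0 => /eqP ets.
by move: st; rewrite ets ltxx.
Qed.

End Good.

Section Meas.
Variable R : realType.
Local Notation mu := (@lebesgue_measure R).

Lemma psd2_psdm (M : 'M[R]_2) : psd2 M -> psdm M.
Proof.
move=> [sym pos].
have e01 : M 0 1 = M 1 0 by have := congr1 (fun A : 'M[R]_2 => A 1 0) sym; rewrite mxE.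
have E3 : lift (ord0:'I_2) (ord0:'I_1) = 1 by apply/val_inj.
have E4 : (ord0 : 'I_2) = 0 by apply/val_inj.
have q : forall x y, 0 <= x ^+ 2 * M 0 0 + 2 * x * y * M 0 1 + y ^+ 2 * M 1 1.
  move=> x y; have := pos (\col_(i < 2) (if i == 0 then x else y)).
  rewrite !mxE !big_ord_recl !big_ord0 !mxE /= !big_ord_recl !big_ord0 !mxE /=.
  rewrite E3 E4 /= -e01.
  move=> h; apply: le_trans h _; rewrite le_eqVlt; apply/orP; left; apply/eqP; ring.
have [h1 h2 h3] := quad_psdm q.
by split.
Qed.

Lemma psdm_abs_le (M : 'M[R]_2) i j : psdm M -> `|M i j| <= M 0 0 + M 1 1.
Proof.
move=> [m1 m2 m3 m4].
have off : `|M 0 1| <= M 0 0 + M 1 1.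
  have := @amgm2 R (M 0 0) (M 1 1) `|M 0 1| m2 m3.
  rewrite real_normK ?num_real // => /(_ m4).
  have := normr_ge0 (M 0 1); lra.
case: (ord2_cases i) => ->; case: (ord2_cases j) => ->; rewrite -?m1 //.
  by rewrite ger0_norm //; lra.
by rewrite ger0_norm //; lra.
Qed.

Lemma good_version (a b : R) (H : R -> 'M[R]_2) : a < b ->
  is_Hamiltonian a b H -> limit_circle a b H ->
  exists G : R -> 'M[R]_2,
  [/\ forall t, psdm (G t),
      forall i j, mu.-integrable setT (EFin \o (fun t => G t i j)),
      forall s t, a <= s -> t <= b -> Omega H s t = Omega G s t &
      mu.-negligible ([set` `]a, b[] `&` [set u | G u = 0])].
Proof.
move=> ab [mH iH aeP nZ] hlc.
have [N [mN muN sN]] := aeP.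
set I : set R := [set` `]a, b[].
have mI : measurable (I : set (measurableTypeR R)) by exact: measurable_itv.
set GS := I `&` ~` N.
have mGS : measurable (GS : set (measurableTypeR R)) by apply: measurableI => //; apply: measurableC.
have GSI : GS `<=` I by move=> x [].
pose G t := if t \in GS then H t else 0.
have Gij : forall i j t, G t i j = ((fun u => H u i j) \_ GS) t.
  by move=> i j t; rewrite patchE /G; case: ifP => _; rewrite ?mxE.
have GSP : forall t, GS t -> psd2 (H t).
  move=> t [It Nt]; apply: contrapT => hn; apply: Nt; apply: sN => /= h; apply: hn.
  by apply: h.
have K1 : forall t, psdm (G t).
  move=> t; rewrite /G; case: ifP => [/set_mem /GSP|_]; first exact: psd2_psdm.
  by split; rewrite ?mxE // expr0n /= mulr0.
have mG : forall i j, measurable_fun setT (fun t => G t i j).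
  move=> i j; rewrite (_ : (fun t => G t i j) = (fun u => H u i j) \_ GS); last first.
    by apply: funext => t; rewrite Gij.
  apply/(measurable_restrictT _ mGS).
  exact: measurable_funS (mH i j).
have trE : forall M : 'M[R]_2, \tr M = M 0 0 + M 1 1.
  move=> M; rewrite /mxtrace !big_ord_recl big_ord0 addr0 /=.
  by congr (M _ _ + M _ _); apply/val_inj.
have Gout : forall t, ~ I t -> G t = 0.
  by move=> t It; rewrite /G; case: ifP => // /set_mem /GSI.
have GeqH : forall t, I t -> ~ N t -> G t = H t.
  move=> t It Nt; rewrite /G; case: ifP => // /negP; apply: contra_notP => _.
  by apply: mem_set; split.
have aeGH : forall (D : set R) (i j : 'I_2), D `<=` I ->
    ae_eq mu D (EFin \o (fun t => G t i j)) (EFin \o (fun t => H t i j)).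
  move=> D i j DI; exists N; split => // t /= /not_implyP [Dt hne]; apply: contrapT => Nt.
  by apply: hne; rewrite GeqH //; apply: DI.
have K2 : forall i j, mu.-integrable setT (EFin \o (fun t => G t i j)).
  have hT : mu.-integrable setT (EFin \o (fun t => G t 0 0 + G t 1 1)).
    apply/integrableP; split.
      apply/measurable_EFinP; apply: measurable_funD; [exact (mG 0 0) | exact (mG 1 1)].
    set g := fun t => G t 0 0 + G t 1 1.
    have g0 : forall t, 0 <= g t by move=> t; have [_ ? ? _] := K1 t; rewrite /g; lra.
    rewrite (@eq_integral _ _ _ mu _ (EFin \o g)); last first.
      by move=> x _ /=; rewrite ger0_norm.
    have e2 : (\int[mu]_x (EFin \o g) x = \int[mu]_(x in I) (EFin \o g) x)%E.
      rewrite (@integral_mkcond _ _ _ mu I); apply: eq_integral => x _; rewrite patchE.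
      case: ifP => // /negP xI; rewrite /= /g Gout ?mxE ?addr0 //.
      by move=> Ix; apply: xI; apply: mem_set.
    have e3 : (\int[mu]_(x in I) (EFin \o g) x = \int[mu]_(x in I) (\tr (H x))%:E)%E.
      apply: ae_eq_integral => //.
      - apply/measurable_EFinP.
        (apply: measurable_funD; apply: (measurable_funS measurableT (subsetT _)));
          [exact (mG 0 0) | exact (mG 1 1)].
      - apply/measurable_EFinP.
        rewrite (_ : (fun x => \tr (H x)) = (fun x => H x 0 0 + H x 1 1)); last first.
          by apply: funext => x; rewrite trE.
        apply: measurable_funD; [exact (mH 0 0) | exact (mH 1 1)].
      - exists N; split => // t /= /not_implyP [Dt hne]; apply: contrapT => Nt.
        by apply: hne; rewrite /g GeqH // trE.
    by rewrite e2 e3; exact: hlc.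
  move=> i j; apply: (le_integrable measurableT _ _ hT) => [| x _].
    apply/measurable_EFinP; exact (mG i j).
  rewrite /comp /= lee_fin (ger0_norm (x := G x 0 0 + G x 1 1)).
    exact: psdm_abs_le.
  by have [_ ? ? _] := K1 x; lra.
have K3 : forall s t, a <= s -> t <= b -> Omega H s t = Omega G s t.
  move=> s t sa tb; apply/matrixP => i j; rewrite !mxE /Rintegral; congr fine.
  have DI : [set` `]s, t[] `<=` I.
    move=> x; rewrite /= !in_itv /= => /andP[h1 h2]; apply/andP; split.
      exact: le_lt_trans sa h1.
    exact: lt_le_trans h2 tb.
  symmetry; apply: ae_eq_integral.
  - exact: measurable_itv.
  - apply/measurable_EFinP; apply: (measurable_funS measurableT (subsetT _)); exact (mG i j).
  - apply/measurable_EFinP; apply: (measurable_funS mI DI); exact (mH i j).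
  - exact (aeGH _ i j DI).
have K4 : mu.-negligible (I `&` [set u | G u = 0]).
  apply: (negligibleS _ (negligibleU nZ (ex_intro _ N (And3 mN muN (@subset_refl _ N))))).
  move=> u [Iu Gu0]; case: (pselect (N u)) => Nu; [right => // | left].
  by split => //; rewrite -GeqH.
by exists G; split.
Qed.

End Meas.


Theorem proposition5p9 (R : realType) (a b : R) (H : R -> 'M[R]_2) (c : R) :
  a < b -> is_Hamiltonian a b H -> limit_circle a b H -> 0 < c ->
  [/\ (* (i) *)
      (forall (r : R) (k : nat) (s : nat -> R),
         0 < r -> s 0%N = a -> s k = b -> (forall l, (l < k)%N -> s l < s l.+1) ->
         (forall l, (1 <= l <= k)%N -> \det (Omega H (s l.-1) (s l)) <= c / r ^+ 2) ->
         (kappa a b H c r <= k)%N),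
      (* (ii) *)
      (forall (r : R) (k : nat) (s : nat -> R),
         0 < r -> s 0%N = a -> s k = b -> (forall l, (l < k)%N -> s l < s l.+1) ->
         (forall l, (1 <= l <= k.-1)%N -> \det (Omega H (s l.-1) (s l)) >= c / r ^+ 2) ->
         (k <= kappa a b H c r)%N),
      (* (iii) *)
      (forall r1 r2 : R, 0 < r1 -> r1 <= r2 ->
         (kappa a b H c r1 <= kappa a b H c r2)%N) &
      (* (iv) *)
      (forall (n : nat) (r : R), (0 < n)%N -> 0 < r ->
         (kappa a b H c (n%:R * r) <= n * kappa a b H c r)%N)].
Proof.
move=> ab hH hlc c0.
have [G [K1 K2 K3 K4]] := good_version ab hH hlc.
have wpsd : forall s t, a <= s -> s <= t -> t <= b -> psdm (Omega H s t).
  by move=> s t h1 h2 h3; rewrite K3 //; apply: Om_psd.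
have wadd : forall s u t, a <= s -> s <= u -> u <= t -> t <= b ->
    Omega H s t = Omega H s u + Omega H u t.
  move=> s u t h1 h2 h3 h4.
  have h5 : a <= u by exact: le_trans h1 h2.
  have h6 : u <= b by exact: le_trans h3 h4.
  have h7 : s <= t by exact: le_trans h2 h3.
  by rewrite !K3 //; apply: Om_add.
have wpos : forall s t, a <= s -> s < t -> t <= b ->
    0 < Omega H s t 0 0 + Omega H s t 1 1.
  move=> s t h1 h2 h3; rewrite K3 //; apply: Om_pos => //.
  apply: negligibleS K4 => x [/= Dx Gx]; split => //.
  move: Dx; rewrite /= !in_itv /= => /andP[x1 x2]; apply/andP; split.
    exact: le_lt_trans h1 x1.
  exact: lt_le_trans x2 h3.
have wcont : forall s (i j : 'I_2), a <= s -> s < b ->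
    {within `[s, b], continuous (fun t => Omega H s t i j)}.
  move=> s i j h1 h2.
  have hc := @Om_cont R G K2 s b i j (ltW h2).
  apply: subspace_eq_continuous hc.
  move=> t /set_mem /=; rewrite in_itv /= => /andP[_ tb].
  by rewrite /from_subspace K3.
have [E A B M C] := all_facts ab wpsd wadd wpos wcont.
have thp : forall r, 0 < r -> 0 < c / r ^+ 2.
  by move=> r r0; rewrite divr_gt0 // exprn_gt0.
have kapP : forall r, 0 < r ->
    exists sigma, spec_of a b (Omega H) (c / r ^+ 2) (kappa a b H c r) sigma.
  move=> r r0; rewrite /kappa; case: pselect => [h|hn]; last first.
    by exfalso; apply: hn; have [n [sg hs]] := E _ (thp r r0); exists n, sg.
  by case: ex_minnP => m /asboolP hm hmin.
split.
- move=> r k s r0 s0 sk sl hl.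
  have [sg hs] := kapP r r0.
  by apply: (A _ _ sg s k (thp r r0) hs) => //; split.
- move=> r k s r0 s0 sk sl hl.
  have [sg hs] := kapP r r0.
  by apply: (B _ _ sg s k (thp r r0) hs) => //; split.
- move=> r1 r2 r10 r12.
  have r20 : 0 < r2 by apply: lt_le_trans r10 r12.
  have [s1 h1] := kapP r1 r10.
  have [s2 h2] := kapP r2 r20.
  apply: (M _ _ _ _ s1 s2 (thp r2 r20) _ h1 h2).
  apply: ler_wpM2l; first exact: ltW.
  rewrite lef_pV2 ?posrE ?exprn_gt0 //.
  nra.
- move=> n r n0 r0.
  have nr0 : 0 < n%:R * r by rewrite mulr_gt0 // ltr0n.
  have [sg hs] := kapP r r0.
  have [tau ht] := kapP _ nr0.
  apply: (C _ _ n _ sg _ tau (thp _ nr0) n0 _ hs ht).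
  have nz : n%:R != 0 :> R by rewrite pnatr_eq0 -lt0n.
  have rz : r != 0 by rewrite gt_eqF.
  by field; rewrite ?nz ?rz.
Qed.
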